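(* Assume CH. There exists a set $A\subseteq\mathbb{R}^2$ such that every vertical slice $A_x=\{y:(x,y)\in A\}$ ($x\in\mathbb{R}$) is cocountable in $\mathbb{R}$, and $A$ is both completely $\mathcal{M}$-nonmeasurable and completely $\mathcal{N}$-nonmeasurable in $\mathbb{R}^2$.
   Context: $\mathcal{M}$ and $\mathcal{N}$ denote the $\sigma$-ideals of meager and Lebesgue-null subsets of $\mathbb{R}^2$. A set $A\subseteq\mathbb{R}^2$ is completely $\mathcal{I}$-nonmeasurable if $A$ meets every Borel set $B\notin\mathcal{I}$ and contains no Borel set $B\notin\mathcal{I}$. *)

(* Defs.v *)
From Stdlib Require Import Reals.
Open Scope R_scope.

Definition set (T : Type) := T -> Prop.
Definition R2 := (R * R)%type.

Definition countable {T : Type} (S : set T) : Prop :=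
  exists f : T -> nat, forall x y, S x -> S y -> f x = f y -> x = y.

(* Continuum hypothesis: every subset of R is countable or has the
   cardinality of R (R injects into it; the converse injection is inclusion). *)
Definition CH : Prop :=
  forall S : set R, countable S \/
    exists f : R -> R, (forall x, S (f x)) /\ (forall x y, f x = f y -> x = y).

Definition ball (p : R2) (r : R) : set R2 :=
  fun q => (fst q - fst p)^2 + (snd q - snd p)^2 < r^2.

Definition is_open (U : set R2) : Prop :=
  forall p, U p -> exists r, 0 < r /\ forall q, ball p r q -> U q.

Inductive borel : set R2 -> Prop :=
  | borel_open : forall U, is_open U -> borel U
  | borel_compl : forall B, borel B -> borel (fun p => ~ B p)
  | borel_union : forall F : nat -> set R2,
      (forall n, borel (F n)) -> borel (fun p => exists n, F n p).

Definition nowhere_dense (S : set R2) : Prop :=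
  forall U, is_open U -> (exists p, U p) ->
    exists V, is_open V /\ (exists p, V p) /\
      (forall p, V p -> U p) /\ (forall p, V p -> ~ S p).

Definition meager (S : set R2) : Prop :=
  exists F : nat -> set R2, (forall n, nowhere_dense (F n)) /\
    forall p, S p -> exists n, F n p.

Definition lebesgue_null (S : set R2) : Prop :=
  forall eps, 0 < eps ->
    exists a b c d : nat -> R,
      (forall n, a n <= b n /\ c n <= d n) /\
      (forall p, S p -> exists n,
          a n <= fst p <= b n /\ c n <= snd p <= d n) /\
      (forall N, sum_f_R0 (fun n => (b n - a n) * (d n - c n)) N <= eps).

Definition completely_nonmeasurable (I : set R2 -> Prop) (A : set R2) : Prop :=
  forall B, borel B -> ~ I B ->
    (exists p, B p /\ A p) /\ ~ (forall p, B p -> A p).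

(* Main.v *)
Require Import Defs.
From Stdlib Require Import Reals Lra Lia List ZArith Classical ClassicalEpsilon FunctionalExtensionality PropExtensionality Wellfounded Cantor.
From Coquelicot Require Coquelicot.
Import ListNotations.

Definition incl {T : Type} (A B : T -> Prop) := forall x, A x -> B x.

Definition chs {T : Type} (t0 : T) (S : T -> Prop) : T := epsilon (inhabits t0) S.
Definition tsucc {T : Type} (t0 : T) (S : T -> Prop) : T -> Prop :=
  fun x => S x \/ x = chs t0 (fun y => ~ S y).

Inductive tower {T : Type} (t0 : T) : (T -> Prop) -> Prop :=
| tw_succ S : tower t0 S -> tower t0 (tsucc t0 S)
| tw_union (F : (T -> Prop) -> Prop) :
    (forall S, F S -> tower t0 S) -> tower t0 (fun x => exists S, F S /\ S x).

Definition extreme {T : Type} (t0 : T) (S : T -> Prop) :=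
  forall U, tower t0 U -> incl U S -> ~ incl S U -> incl (tsucc t0 U) S.

Lemma set_ext {T : Type} (A B : T -> Prop) : incl A B -> incl B A -> A = B.
Proof.
  intros H1 H2. apply functional_extensionality. intro x.
  apply propositional_extensionality. split; auto.
Qed.

Lemma extreme_cmp {T : Type} (t0 : T) S : extreme t0 S ->
  forall U, tower t0 U -> incl U S \/ incl (tsucc t0 S) U.
Proof.
  intros HS U HU. induction HU as [U HU IH | F HF IH].
  - destruct IH as [H | H].
    + destruct (classic (incl S U)) as [H2 | H2].
      * right. assert (U = S) by (apply set_ext; auto). subst. intros x Hx; exact Hx.
      * left. apply HS; auto.
    + right. intros x Hx. left. auto.
  - destruct (classic (exists V, F V /\ incl (tsucc t0 S) V)) as [[V [HV1 HV2]] | H].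
    + right. intros x Hx. exists V. auto.
    + left. intros x [V [HV Vx]]. destruct (IH V HV) as [H1 | H1].
      * auto.
      * exfalso. apply H. eauto.
Qed.

Lemma all_extreme {T : Type} (t0 : T) S : tower t0 S -> extreme t0 S.
Proof.
  intro HS. induction HS as [S HS IH | F HF IH].
  - intros U HU H1 H2. destruct (extreme_cmp t0 S IH U HU) as [H | H].
    + destruct (classic (incl S U)) as [H3 | H3].
      * assert (U = S) by (apply set_ext; auto). subst. intros x Hx; exact Hx.
      * intros x Hx. left. apply (IH U HU H H3). exact Hx.
    + exfalso. apply H2. exact H.
  - intros U HU H1 H2.
    assert (exists W, F W /\ ~ incl W U) as [W [HW1 HW2]].
    { apply NNPP. intro Hn. apply H2. intros x [W [HW Wx]].
      destruct (classic (incl W U)) as [Hi | Hi]; [auto | exfalso; eauto]. }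
    destruct (extreme_cmp t0 W (IH W HW1) U HU) as [H | H].
    + intros x Hx. exists W. split; auto. apply (IH W HW1 U HU H); auto.
    + exfalso. apply HW2. intros x Hx. apply H. left. auto.
Qed.

Lemma tower_cmp {T : Type} (t0 : T) S U : tower t0 S -> tower t0 U -> incl U S \/ incl S U.
Proof.
  intros HS HU. destruct (extreme_cmp t0 S (all_extreme t0 S HS) U HU) as [H|H]; auto.
  right. intros x Hx. apply H. left. auto.
Qed.

Definition Pset {T : Type} (t0 : T) (x : T) : T -> Prop :=
  fun y => exists S, tower t0 S /\ ~ S x /\ S y.
Definition wlt {T : Type} (t0 : T) (y x : T) : Prop := Pset t0 x y.

Lemma Pset_tower {T : Type} (t0 : T) x : tower t0 (Pset t0 x).
Proof.
  unfold Pset.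
  assert (E : (fun y => exists S, tower t0 S /\ ~ S x /\ S y) =
              (fun y => exists S, (tower t0 S /\ ~ S x) /\ S y)).
  { apply set_ext; intros y [S H]; exists S; tauto. }
  rewrite E. apply tw_union. intros S [H _]; auto.
Qed.

Lemma Pset_irr {T : Type} (t0 : T) x : ~ Pset t0 x x.
Proof. intros [S [_ [H1 H2]]]. auto. Qed.

Lemma chs_spec {T : Type} (t0 : T) (S : T -> Prop) : (exists x, S x) -> S (chs t0 S).
Proof. intro H. unfold chs. apply epsilon_spec. exact H. Qed.

Lemma Pset_ch {T : Type} (t0 : T) x : x = chs t0 (fun y => ~ Pset t0 x y).
Proof.
  destruct (classic (tsucc t0 (Pset t0 x) x)) as [[H | H] | H].
  - exfalso. exact (Pset_irr t0 x H).
  - exact H.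
  - exfalso.
    assert (Hc : ~ Pset t0 x (chs t0 (fun y => ~ Pset t0 x y))).
    { apply chs_spec. exists x. apply Pset_irr. }
    apply Hc. exists (tsucc t0 (Pset t0 x)). split; [apply tw_succ, Pset_tower|].
    split; auto. right. reflexivity.
Qed.

Lemma wlt_total {T : Type} (t0 : T) x y : x <> y -> wlt t0 x y \/ wlt t0 y x.
Proof.
  intro Hne. unfold wlt.
  assert (key : forall a b, incl (Pset t0 a) (Pset t0 b) -> a <> b -> Pset t0 b a).
  { intros a b Hab Hne2.
    destruct (tower_cmp t0 _ _ (Pset_tower t0 b) (tw_succ t0 _ (Pset_tower t0 a))) as [H|H].
    - apply H. right. apply Pset_ch.
    - apply NNPP. intro Hn. apply Hne2.
      assert (E : Pset t0 a = Pset t0 b).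
      { apply set_ext; auto. intros z Hz. destruct (H z Hz) as [H1|H1]; auto.
        subst z. exfalso. apply Hn. rewrite <- Pset_ch in Hz. exact Hz. }
      rewrite (Pset_ch t0 a), (Pset_ch t0 b), E. reflexivity. }
  destruct (tower_cmp t0 _ _ (Pset_tower t0 x) (Pset_tower t0 y)) as [H|H].
  - right. apply key; auto.
  - left. apply key; auto.
Qed.

Lemma wlt_wf {T : Type} (t0 : T) : well_founded (wlt t0).
Proof.
  intro a. apply NNPP. intro Ha.
  set (A := fun x => ~ Acc (wlt t0) x).
  set (Q := fun y => exists S, (tower t0 S /\ (forall z, S z -> ~ A z)) /\ S y).
  assert (HQ : tower t0 Q) by (apply tw_union; intros S [H _]; auto).
  set (m := chs t0 (fun y => ~ Q y)).
  assert (Hm : ~ Q m).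
  { apply chs_spec. exists a. intros [S [[_ H1] H2]]. apply (H1 a H2). exact Ha. }
  assert (Am : A m).
  { apply NNPP. intro Hn. apply Hm. exists (tsucc t0 Q). split; [split|].
    - apply tw_succ; auto.
    - intros z [Hz | Hz].
      + destruct Hz as [S [[_ H1] H2]]. apply H1; auto.
      + subst z. exact Hn.
    - right. reflexivity. }
  apply Am. constructor. intros y Hy. unfold wlt in Hy.
  destruct (tower_cmp t0 _ _ (Pset_tower t0 m) (tw_succ t0 _ HQ)) as [H|H].
  - exfalso. apply (Pset_irr t0 m). apply H. right. reflexivity.
  - destruct (H y Hy) as [Hq | Hq].
    + destruct Hq as [S [[_ H1] H2]]. apply NNPP. exact (H1 y H2).
    + exfalso. fold m in Hq. subst y. exact (Pset_irr t0 m Hy).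
Qed.

Lemma wf_min {T : Type} (lt : T -> T -> Prop) (P : T -> Prop) :
  well_founded lt -> (exists x, P x) -> exists m, P m /\ forall y, lt y m -> ~ P y.
Proof.
  intros Hwf [x Hx]. apply NNPP. intro Hn.
  assert (forall z, Acc lt z -> ~ P z).
  { intros z Hz. induction Hz as [z _ IH]. intro Pz. apply Hn. exists z. split; auto. }
  apply (H x (Hwf x) Hx).
Qed.

Lemma good_order {T : Type} (t0 : T) (e : T -> R) :
  (forall a b, e a = e b -> a = b) -> CH ->
  exists lt : T -> T -> Prop, well_founded lt /\
    (forall x y, x <> y -> lt x y \/ lt y x) /\
    (forall y, countable (fun x => lt x y)).
Proof.
  intros He Hch.
  destruct (classic (forall y, countable (fun x => wlt t0 x y))) as [Hall | Hnot].
  - exists (wlt t0). split; [apply wlt_wf|]. split; [apply wlt_total|exact Hall].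
  - apply not_all_ex_not in Hnot.
    destruct (wf_min (wlt t0) _ (wlt_wf t0) Hnot) as [u [Hu Hmin]].
    set (S := fun x => wlt t0 x u).
    set (IS := fun r => exists x, S x /\ e x = r).
    assert (HIS : ~ countable IS).
    { intros [f Hf]. apply Hu. exists (fun x => f (e x)). intros x y Hx Hy Hxy.
      apply He. apply Hf; auto; [exists x | exists y]; auto. }
    destruct (Hch IS) as [Hc | [g [Hg1 Hg2]]]; [contradiction|].
    set (h := fun t => epsilon (inhabits t0) (fun x => S x /\ e x = g (e t))).
    assert (Hh : forall t, S (h t) /\ e (h t) = g (e t)).
    { intro t. unfold h. apply epsilon_spec. apply (Hg1 (e t)). }
    assert (Hhi : forall a b, h a = h b -> a = b).
    { intros a b Hab. apply He. apply Hg2.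
      rewrite <- (proj2 (Hh a)), <- (proj2 (Hh b)), Hab. reflexivity. }
    exists (fun a b => wlt t0 (h a) (h b)). split; [|split].
    + apply wf_inverse_image. apply wlt_wf.
    + intros x y Hxy. apply wlt_total. intro E. apply Hxy. apply Hhi. exact E.
    + intro y. assert (Hc : countable (fun x => wlt t0 x (h y))).
      { apply NNPP. intro Hn. exact (Hmin (h y) (proj1 (Hh y)) Hn). }
      destruct Hc as [f Hf]. exists (fun x => f (h x)). intros a b Ha Hb Hab.
      apply Hhi. apply Hf; auto.
Qed.

Module SeriesPart.
Import Coquelicot.Coquelicot.
Open Scope R_scope.

Lemma ex_series_geom_scal c : ex_series (fun k => c * (/3)^k).
Proof.
  exists (c * / (1 - /3)). apply (is_series_scal_l c (fun k => (/3)^k)).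
  apply is_series_geom. rewrite Rabs_pos_eq; lra.
Qed.

Lemma ex_series_bnd (d : nat -> R) :
  (forall k, Rabs (d k) <= (/3)^k) -> ex_series d.
Proof.
  intro H. apply (ex_series_le d (fun k => (/3)^k)).
  - intro k. apply H.
  - apply ex_series_geom. rewrite Rabs_pos_eq; lra.
Qed.

Lemma Series_shift0 (d : nat -> R) n :
  (forall k, Rabs (d k) <= (/3)^k) -> (forall k, (k < n)%nat -> d k = 0) ->
  Series d = Series (fun k => d (n + k)%nat).
Proof.
  revert d. induction n as [|n IH]; intros d Hb Hz.
  - apply Series_ext. intro k. reflexivity.
  - rewrite Series_incr_1 by (apply ex_series_bnd; auto).
    rewrite (Hz 0%nat) by lia. rewrite Rplus_0_l.
    rewrite (IH (fun k => d (S k))).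
    + apply Series_ext. intro k. reflexivity.
    + intro k. apply Rle_trans with ((/3)^(S k)); auto.
      simpl. assert (0 <= (/3)^k) by (apply pow_le; lra). nra.
    + intros k Hk. apply Hz. lia.
Qed.

Lemma Series_nonzero (d : nat -> R) n :
  (forall k, Rabs (d k) <= (/3)^k) -> (forall k, (k < n)%nat -> d k = 0) ->
  Rabs (d n) = (/3)^n -> Series d <> 0.
Proof.
  intros Hb Hz Hn. rewrite (Series_shift0 d n Hb Hz).
  set (t := fun k => d (n + k)%nat).
  assert (Hbt : forall k, Rabs (t k) <= (/3)^n * (/3)^k).
  { intro k. unfold t. rewrite <- pow_add. apply Hb. }
  assert (Ht : ex_series t).
  { apply (ex_series_le t (fun k => (/3)^n * (/3)^k)).
    - intro k. apply Hbt.
    - apply ex_series_geom_scal. }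
  rewrite Series_incr_1 by exact Ht.
  assert (Htail : Rabs (Series (fun k => t (S k))) <= (/3)^n * / 2).
  { eapply Rle_trans. apply Series_Rabs.
    - apply (@ex_series_le R_AbsRing R_CompleteNormedModule _ (fun k => (/3)^n * (/3)^(S k))).
      + intro k. unfold norm; simpl. rewrite Rabs_Rabsolu. apply Hbt.
      + apply (ex_series_ext (fun k => ((/3)^n * /3) * (/3)^k)).
        * intro k. simpl. ring.
        * apply ex_series_geom_scal.
    - eapply Rle_trans. apply (Series_le _ (fun k => (/3)^n * ((/3) * (/3)^k))).
      + intro k. split; [apply Rabs_pos|]. specialize (Hbt (S k)). simpl in Hbt. exact Hbt.
      + apply (ex_series_ext (fun k => ((/3)^n * /3) * (/3)^k)).
        * intro k. simpl. ring.
        * apply ex_series_geom_scal.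
      + rewrite Series_scal_l, Series_scal_l.
        rewrite (is_series_unique (pow (/3)) _ (is_series_geom (/3) ltac:(rewrite Rabs_pos_eq; lra))).
        assert (0 <= (/3)^n) by (apply pow_le; lra).
        replace (/3 * / (1 - / 3)) with (/2) by field. lra. }
  unfold t at 1. rewrite Nat.add_0_r.
  assert (0 < (/3)^n) by (apply pow_lt; lra).
  intro E. assert (Series (fun k => t (S k)) = - d n) by lra.
  rewrite H0, Rabs_Ropp, Hn in Htail. lra.
Qed.

Definition bitR (P : nat -> Prop) (n : nat) : R :=
  if excluded_middle_informative (P n) then 1 else 0.

Definition realenc (P : nat -> Prop) : R := Series (fun n => bitR P n * (/3)^n).

Lemma least_diff (P Q : nat -> Prop) : ~ (forall n, P n <-> Q n) ->
  exists n, ~ (P n <-> Q n) /\ forall k, (k < n)%nat -> (P k <-> Q k).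
Proof.
  intro H. apply not_all_ex_not in H. destruct H as [n0 Hn0].
  induction n0 as [n0 IH] using (well_founded_induction Wf_nat.lt_wf).
  destruct (classic (forall k, (k < n0)%nat -> (P k <-> Q k))) as [Hk|Hk].
  - eauto.
  - apply not_all_ex_not in Hk. destruct Hk as [k Hk].
    apply imply_to_and in Hk. destruct Hk. eauto.
Qed.

Lemma realenc_inj (P Q : nat -> Prop) : realenc P = realenc Q -> forall n, P n <-> Q n.
Proof.
  intro E. apply NNPP. intro H. destruct (least_diff P Q H) as [n [Hn Hk]].
  set (d := fun k => bitR P k * (/3)^k - bitR Q k * (/3)^k).
  assert (Hb : forall k, Rabs (d k) <= (/3)^k).
  { intro k. unfold d, bitR. assert (0 < (/3)^k) by (apply pow_lt; lra).
    destruct (excluded_middle_informative (P k)); destruct (excluded_middle_informative (Q k));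
    [rewrite Rminus_diag, Rabs_R0 | rewrite Rmult_0_l, Rminus_0_r, Rmult_1_l, Rabs_pos_eq
    | rewrite Rmult_0_l, Rmult_1_l, Rminus_0_l, Rabs_Ropp, Rabs_pos_eq
    | rewrite Rminus_diag, Rabs_R0]; lra. }
  apply (Series_nonzero d n Hb).
  - intros k Hlt. unfold d, bitR. specialize (Hk k Hlt).
    destruct (excluded_middle_informative (P k)); destruct (excluded_middle_informative (Q k)); try ring; tauto.
  - unfold d, bitR. assert (0 < (/3)^n) by (apply pow_lt; lra).
    destruct (excluded_middle_informative (P n)); destruct (excluded_middle_informative (Q n)); try tauto.
    + rewrite Rmult_0_l, Rminus_0_r, Rmult_1_l, Rabs_pos_eq; lra.
    + rewrite Rmult_0_l, Rmult_1_l, Rminus_0_l, Rabs_Ropp, Rabs_pos_eq; lra.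
  - unfold d. rewrite Series_minus.
    + unfold realenc in E. lra.
    + apply ex_series_bnd. intro k. unfold bitR. assert (0 < (/3)^k) by (apply pow_lt; lra).
      destruct (excluded_middle_informative (P k)); rewrite Rabs_pos_eq; lra.
    + apply ex_series_bnd. intro k. unfold bitR. assert (0 < (/3)^k) by (apply pow_lt; lra).
      destruct (excluded_middle_informative (Q k)); rewrite Rabs_pos_eq; lra.
Qed.

End SeriesPart.
Import SeriesPart.
Close Scope R_scope.

Inductive code : Type :=
| Cleaf (v : nat -> nat)
| Ccompl (c : code)
| Cunion (f : nat -> code).

Fixpoint enc (c : code) (l : list nat) : nat :=
  match c, l with
  | Cleaf _, nil => 0
  | Cleaf v, i :: _ => v i
  | Ccompl _, nil => 1
  | Ccompl c', _ :: l' => enc c' l'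
  | Cunion _, nil => 2
  | Cunion f, i :: l' => enc (f i) l'
  end.

Lemma enc_inj c1 c2 : enc c1 = enc c2 -> c1 = c2.
Proof.
  revert c2. induction c1 as [v | c IH | f IH]; intros c2 E;
  destruct c2 as [w | d | g];
  try (pose proof (f_equal (fun h => h nil) E) as E0; simpl in E0; discriminate).
  - f_equal. apply functional_extensionality. intro i.
    exact (f_equal (fun h => h [i]) E).
  - f_equal. apply IH. apply functional_extensionality. intro l.
    exact (f_equal (fun h => h (0 :: l)) E).
  - f_equal. apply functional_extensionality. intro i. apply IH.
    apply functional_extensionality. intro l.
    exact (f_equal (fun h => h (i :: l)) E).
Qed.

Fixpoint lcode (l : list nat) : nat :=
  match l with nil => 0 | x :: l' => S (to_nat (x, lcode l')) end.

Lemma to_nat_inj p q : to_nat p = to_nat q -> p = q.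
Proof. intro E. rewrite <- (cancel_of_to p), <- (cancel_of_to q), E. reflexivity. Qed.

Lemma lcode_inj l1 l2 : lcode l1 = lcode l2 -> l1 = l2.
Proof.
  revert l2. induction l1 as [|x l1 IH]; intros [|y l2] E; cbn [lcode] in E; try discriminate; auto.
  apply eq_add_S in E. apply to_nat_inj in E. injection E as E1 E2. subst. f_equal. auto.
Qed.

Definition graphP (f : list nat -> nat) : nat -> Prop :=
  fun k => exists l, k = to_nat (lcode l, f l).

Lemma graphP_inj f g : (forall k, graphP f k <-> graphP g k) -> f = g.
Proof.
  intro H. apply functional_extensionality. intro l.
  destruct (proj1 (H (to_nat (lcode l, f l))) (ex_intro _ l eq_refl)) as [l' E].
  apply to_nat_inj in E. injection E as E1 E2. apply lcode_inj in E1. subst. auto.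
Qed.

Definition ecode (c : code) : R := realenc (graphP (enc c)).

Lemma ecode_inj a b : ecode a = ecode b -> a = b.
Proof.
  intro E. apply enc_inj, graphP_inj, realenc_inj. exact E.
Qed.

Open Scope R_scope.

Lemma IZR_nat_diff z : IZR z = INR (Z.to_nat z) - INR (Z.to_nat (- z)).
Proof. rewrite !INR_IZR_INZ, <- minus_IZR. f_equal. lia. Qed.

Lemma nat_bound y : exists m, y <= INR m.
Proof.
  destruct (archimed y) as [H1 _]. exists (Z.to_nat (up y)). rewrite INR_IZR_INZ.
  destruct (Z_le_gt_dec 0 (up y)) as [H|H].
  - rewrite Z2Nat.id by exact H. lra.
  - assert (IZR (up y) < 0) by (apply IZR_lt; lia).
    replace (Z.to_nat (up y)) with 0%nat by lia. simpl. lra.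
Qed.

Lemma Rabs_sub_le u w : Rabs (u - w) <= Rabs u + Rabs w.
Proof. unfold Rminus. eapply Rle_trans; [apply Rabs_triang|]. rewrite Rabs_Ropp. lra. Qed.

Lemma sq_lt_of_abs u t : Rabs u < t -> u ^ 2 < t ^ 2.
Proof.
  intro H. assert (0 <= Rabs u) by apply Rabs_pos.
  rewrite <- (pow2_abs u). nra.
Qed.

Definition box (v : nat -> nat) : set R2 :=
  fun q => v 5%nat <> 0%nat /\
    Rabs (fst q - (INR (v 1%nat) - INR (v 2%nat)) * (/2)^(v 0%nat)) < 2 * (/2)^(v 0%nat) /\
    Rabs (snd q - (INR (v 3%nat) - INR (v 4%nat)) * (/2)^(v 0%nat)) < 2 * (/2)^(v 0%nat).

Fixpoint interp (c : code) : set R2 :=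
  match c with
  | Cleaf v => box v
  | Ccompl c' => fun p => ~ interp c' p
  | Cunion f => fun p => exists n, interp (f n) p
  end.

Definition mkv (k a1 a2 b1 b2 : nat) : nat -> nat :=
  fun i => match i with 0 => k | 1 => a1 | 2 => a2 | 3 => b1 | 4 => b2 | _ => 1 end%nat.

Definition leafU (U : set R2) (k a1 a2 b1 b2 : nat) : code :=
  if excluded_middle_informative (forall q, box (mkv k a1 a2 b1 b2) q -> U q)
  then Cleaf (mkv k a1 a2 b1 b2) else Cleaf (fun _ => 0%nat).

Definition openU (U : set R2) : code :=
  Cunion (fun k => Cunion (fun a1 => Cunion (fun a2 => Cunion (fun b1 =>
    Cunion (fun b2 => leafU U k a1 a2 b1 b2))))).

Lemma approx (x h : R) : 0 < h -> exists a1 a2 : nat,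
  Rabs (x - (INR a1 - INR a2) * h) < h.
Proof.
  intro Hh. destruct (archimed (x / h)) as [H1 H2].
  set (z := (up (x / h) - 1)%Z).
  exists (Z.to_nat z), (Z.to_nat (- z)). rewrite <- IZR_nat_diff.
  unfold z. rewrite minus_IZR.
  assert (E : x = (x / h) * h) by (field; lra).
  assert (x / h - 1 < IZR (up (x / h)) - 1 <= x / h) by lra.
  apply Rabs_def1.
  - rewrite E at 1. nra.
  - rewrite E at 1. nra.
Qed.

Lemma open_code U : is_open U -> forall p, U p <-> interp (openU U) p.
Proof.
  intros HU p. split.
  - intro Hp. destruct (HU p Hp) as [r [Hr Hball]].
    destruct (pow_lt_1_zero (/2) ltac:(rewrite Rabs_pos_eq; lra) (r/5) ltac:(lra)) as [k Hk].
    specialize (Hk k (le_n k)). rewrite Rabs_pos_eq in Hk by (apply pow_le; lra).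
    set (h := (/2)^k) in *.
    assert (Hh : 0 < h) by (apply pow_lt; lra).
    destruct (approx (fst p) h Hh) as [a1 [a2 Ha]].
    destruct (approx (snd p) h Hh) as [b1 [b2 Hb]].
    simpl. exists k, a1, a2, b1, b2. unfold leafU.
    destruct (excluded_middle_informative _) as [Hin | Hnot].
    + simpl. unfold box, mkv. fold h. split; [discriminate|]. split; lra.
    + exfalso. apply Hnot. intros q [_ [Hq1 Hq2]]. apply Hball.
      unfold mkv in Hq1, Hq2. fold h in Hq1, Hq2.
      unfold ball.
      assert (Hx : Rabs (fst q - fst p) < 3 * h).
      { replace (fst q - fst p) with ((fst q - (INR a1 - INR a2) * h) - (fst p - (INR a1 - INR a2) * h)) by ring.
        eapply Rle_lt_trans. apply Rabs_sub_le. lra. }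
      assert (Hy : Rabs (snd q - snd p) < 3 * h).
      { replace (snd q - snd p) with ((snd q - (INR b1 - INR b2) * h) - (snd p - (INR b1 - INR b2) * h)) by ring.
        eapply Rle_lt_trans. apply Rabs_sub_le. lra. }
      apply sq_lt_of_abs in Hx. apply sq_lt_of_abs in Hy. nra.
  - simpl. intros [k [a1 [a2 [b1 [b2 H]]]]]. unfold leafU in H.
    destruct (excluded_middle_informative _) as [Hin | Hnot].
    + apply Hin. exact H.
    + simpl in H. destruct H as [H _]. exfalso. apply H. reflexivity.
Qed.

Lemma borel_code B : borel B -> exists c, forall p, B p <-> interp c p.
Proof.
  intro HB. induction HB as [U HU | B HB IH | F HF IH].
  - exists (openU U). apply open_code. exact HU.
  - destruct IH as [c Hc]. exists (Ccompl c). intro p. simpl. rewrite Hc. tauto.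
  - destruct (choice (fun n c => forall p, F n p <-> interp c p) IH) as [g Hg].
    exists (Cunion g). intro p. simpl. split.
    + intros [n Hn]. exists n. apply Hg. exact Hn.
    + intros [n Hn]. exists n. apply Hg. exact Hn.
Qed.

Lemma nd_line (S : set R2) : (forall s s', S s -> S s' -> fst s = fst s') -> nowhere_dense S.
Proof.
  intros HS U HU [p Hp].
  destruct (classic (exists s, S s)) as [[s0 Hs0] | Hno].
  - set (x0 := fst s0).
    exists (fun q => U q /\ fst q <> x0). split; [|split; [|split]].
    + intros q [Uq Hq]. destruct (HU q Uq) as [r1 [Hr1 Hb]].
      assert (Hd : 0 < Rabs (fst q - x0)) by (apply Rabs_pos_lt; lra).
      exists (Rmin r1 (Rabs (fst q - x0))). split; [apply Rmin_pos; lra|].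
      intros q' Hq'. unfold ball in Hq'.
      assert (H1 : Rmin r1 (Rabs (fst q - x0)) <= r1) by apply Rmin_l.
      assert (H2 : Rmin r1 (Rabs (fst q - x0)) <= Rabs (fst q - x0)) by apply Rmin_r.
      assert (H0 : 0 < Rmin r1 (Rabs (fst q - x0))) by (apply Rmin_pos; lra).
      set (m := Rmin r1 (Rabs (fst q - x0))) in *.
      split.
      * apply Hb. unfold ball. nra.
      * intro E. rewrite E in Hq'.
        assert ((x0 - fst q)^2 = Rabs (fst q - x0) ^ 2).
        { rewrite pow2_abs. ring. }
        assert (0 <= (snd q' - snd q)^2) by (apply pow2_ge_0). nra.
    + destruct (HU p Hp) as [r [Hr Hb]].
      destruct (Req_dec (fst p) x0) as [E|E].
      * exists (fst p + r/2, snd p). split; [apply Hb; unfold ball; simpl; nra | simpl; lra].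
      * exists p. auto.
    + intros q [Uq _]. exact Uq.
    + intros q [_ Hq] Sq. apply Hq. apply HS; auto.
  - exists U. split; [exact HU|]. split; [eauto|]. split; auto.
    intros q _ Sq. apply Hno. eauto.
Qed.

Lemma col_meager (C : set R) : countable C -> meager (fun p => C (fst p)).
Proof.
  intros [f Hf]. exists (fun n p => C (fst p) /\ f (fst p) = n). split.
  - intro n. apply nd_line. intros s s' [H1 H2] [H3 H4]. apply Hf; auto. congruence.
  - intros p Hp. exists (f (fst p)). auto.
Qed.

Lemma sum_zero (g : nat -> R) : (forall n, g n = 0) -> forall N, sum_f_R0 g N = 0.
Proof.
  intros H N. induction N as [|N IH]; simpl; rewrite H; [reflexivity|]. rewrite IH. ring.
Qed.

Lemma col_null (C : set R) : countable C -> lebesgue_null (fun p => C (fst p)).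
Proof.
  intros [f Hf] eps Heps.
  set (xx := fun n => epsilon (inhabits 0) (fun x => C x /\ f x = n)).
  set (a := fun k => xx (fst (of_nat k))).
  set (c := fun k => - INR (snd (of_nat k))).
  set (d := fun k => INR (snd (of_nat k))).
  exists a, a, c, d. split; [|split].
  - intro n. split; [lra|]. unfold c, d. assert (0 <= INR (snd (of_nat n))) by apply pos_INR. lra.
  - intros p Hp. destruct (nat_bound (Rabs (snd p))) as [m Hm].
    exists (to_nat (f (fst p), m)). unfold a, c, d. rewrite cancel_of_to. simpl.
    assert (E : xx (f (fst p)) = fst p).
    { assert (H : C (xx (f (fst p))) /\ f (xx (f (fst p))) = f (fst p)).
      { unfold xx. apply epsilon_spec. exists (fst p). auto. }
      apply Hf; tauto. }
    rewrite E. split; [lra|].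
    unfold Rabs in Hm. destruct (Rcase_abs (snd p)); lra.
  - intro N. rewrite sum_zero; [lra|]. intro n. ring.
Qed.

Definition bad (c : code) : Prop := ~ meager (interp c) \/ ~ lebesgue_null (interp c).

Lemma meager_mono (S T : set R2) : meager S -> (forall p, T p -> S p) -> meager T.
Proof. intros [F [H1 H2]] H. exists F. split; auto. Qed.

Lemma null_mono (S T : set R2) : lebesgue_null S -> (forall p, T p -> S p) -> lebesgue_null T.
Proof.
  intros H HT eps Heps. destruct (H eps Heps) as [a [b [c [d [H1 [H2 H3]]]]]].
  exists a, b, c, d. split; auto.
Qed.

Lemma fresh (c : code) (U : set R) : bad c -> countable U ->
  exists p, interp c p /\ ~ U (fst p).
Proof.
  intros Hb HU. apply NNPP. intro Hn.
  assert (Hs : forall p, interp c p -> U (fst p)).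
  { intros p Hp. apply NNPP. intro H. apply Hn. eauto. }
  destruct Hb as [Hb | Hb]; apply Hb.
  - eapply meager_mono; [apply col_meager, HU | exact Hs].
  - eapply null_mono; [apply col_null, HU | exact Hs].
Qed.

Lemma countable_add (U : set R) x : countable U -> countable (fun y => U y \/ y = x).
Proof.
  intros [f Hf].
  exists (fun y => if excluded_middle_informative (U y) then S (f y) else 0%nat).
  intros a b Ha Hb E.
  destruct (excluded_middle_informative (U a)); destruct (excluded_middle_informative (U b)).
  - apply Hf; auto.
  - discriminate.
  - discriminate.
  - destruct Ha; [contradiction|]. destruct Hb; [contradiction|]. congruence.
Qed.

Definition inhR2 : inhabited R2 := inhabits (0, 0).

Definition Uset (lt : code -> code -> Prop) (d : code)
  (rec : forall c, lt c d -> R2 * R2) : set R :=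
  fun x => exists c (h : lt c d), fst (fst (rec c h)) = x \/ fst (snd (rec c h)) = x.

Definition step (lt : code -> code -> Prop) (d : code)
  (rec : forall c, lt c d -> R2 * R2) : R2 * R2 :=
  let U := Uset lt d rec in
  let p := epsilon inhR2 (fun p => interp d p /\ ~ U (fst p)) in
  let q := epsilon inhR2 (fun q => interp d q /\ ~ U (fst q) /\ fst q <> fst p) in
  (p, q).

Definition val (lt : code -> code -> Prop) (wf : well_founded lt) : code -> R2 * R2 :=
  Fix wf (fun _ => (R2 * R2)%type) (step lt).

Lemma val_eq lt wf d : val lt wf d = step lt d (fun c _ => val lt wf c).
Proof.
  unfold val. refine (Fix_eq wf (fun _ => (R2 * R2)%type) (step lt) _ d).
  intros x f g H.
  assert (f = g).
  { apply functional_extensionality_dep. intro y.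
    apply functional_extensionality_dep. intro h. apply H. }
  subst. reflexivity.
Qed.

Definition Useg lt wf (d : code) : set R :=
  fun x => exists c, lt c d /\ (fst (fst (val lt wf c)) = x \/ fst (snd (val lt wf c)) = x).

Lemma Useg_count lt wf d : countable (fun c => lt c d) -> countable (Useg lt wf d).
Proof.
  intros [f Hf].
  set (inhc := inhabits (Cleaf (fun _ => 0%nat))).
  set (w := fun x => epsilon inhc (fun c => lt c d /\
            (fst (fst (val lt wf c)) = x \/ fst (snd (val lt wf c)) = x))).
  assert (Hw : forall x, Useg lt wf d x -> lt (w x) d /\
            (fst (fst (val lt wf (w x))) = x \/ fst (snd (val lt wf (w x))) = x)).
  { intros x Hx. unfold w. apply epsilon_spec. exact Hx. }
  exists (fun x => if excluded_middle_informative (fst (fst (val lt wf (w x))) = x)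
                   then (2 * f (w x))%nat else S (2 * f (w x))).
  intros x y Hx Hy E.
  destruct (Hw x Hx) as [Hx1 Hx2]. destruct (Hw y Hy) as [Hy1 Hy2].
  destruct (excluded_middle_informative (fst (fst (val lt wf (w x))) = x)) as [e1|e1];
  destruct (excluded_middle_informative (fst (fst (val lt wf (w y))) = y)) as [e2|e2].
  - assert (f (w x) = f (w y)) by lia. assert (w x = w y) by (apply Hf; auto). congruence.
  - lia.
  - lia.
  - assert (f (w x) = f (w y)) by lia. assert (w x = w y) by (apply Hf; auto).
    destruct Hx2 as [|Hx2]; [contradiction|]. destruct Hy2 as [|Hy2]; [contradiction|]. congruence.
Qed.

Lemma val_spec lt wf d : countable (fun c => lt c d) -> bad d ->
  let p := fst (val lt wf d) in let q := snd (val lt wf d) in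
  interp d p /\ ~ Useg lt wf d (fst p) /\ interp d q /\ ~ Useg lt wf d (fst q) /\ fst q <> fst p.
Proof.
  intros Hc Hb. rewrite val_eq. unfold step. cbv zeta.
  assert (EU : Uset lt d (fun c _ => val lt wf c) = Useg lt wf d).
  { apply functional_extensionality. intro x. apply propositional_extensionality.
    unfold Uset, Useg. split; intros [c [h H]]; eauto. }
  rewrite EU. simpl.
  set (p := epsilon inhR2 (fun p => interp d p /\ ~ Useg lt wf d (fst p))).
  assert (Hp : interp d p /\ ~ Useg lt wf d (fst p)).
  { apply epsilon_spec. apply fresh; [exact Hb | apply Useg_count; exact Hc]. }
  assert (Hq : let q := epsilon inhR2 (fun q => interp d q /\ ~ Useg lt wf d (fst q) /\ fst q <> fst p) in
     interp d q /\ ~ Useg lt wf d (fst q) /\ fst q <> fst p).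
  { apply epsilon_spec. destruct (fresh d (fun y => Useg lt wf d y \/ y = fst p) Hb) as [q [H1 H2]].
    - apply countable_add. apply Useg_count; auto.
    - exists q. split; [exact H1|]. split; intro HH; apply H2; [left | right]; exact HH. }
  simpl in Hq. tauto.
Qed.

Theorem mainTheorem5 :
  CH ->
  exists A : set R2,
    (forall x : R, countable (fun y : R => ~ A (x, y))) /\
    completely_nonmeasurable meager A /\
    completely_nonmeasurable lebesgue_null A.
Proof.
  intro Hch.
  destruct (good_order (Cleaf (fun _ => 0%nat)) ecode ecode_inj Hch) as [lt [wf [Htot Hcnt]]].
  set (q := fun d => snd (val lt wf d)).
  set (p := fun d => fst (val lt wf d)).
  assert (Hs : forall d, bad d -> interp d (p d) /\ ~ Useg lt wf d (fst (p d)) /\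
     interp d (q d) /\ ~ Useg lt wf d (fst (q d)) /\ fst (q d) <> fst (p d)).
  { intros d Hd. exact (val_spec lt wf d (Hcnt d) Hd). }
  assert (Hdist : forall d d', bad d -> bad d' -> d <> d' ->
     fst (q d) <> fst (q d') /\ fst (p d) <> fst (q d')).
  { intros d d' Hd Hd' Hne. destruct (Htot d d' Hne) as [H | H].
    - destruct (Hs d' Hd') as [_ [H1 [_ [H2 _]]]]. split; intro E.
      + apply H2. exists d. split; [exact H|]. right. exact E.
      + apply H2. exists d. split; [exact H|]. left. exact E.
    - destruct (Hs d Hd) as [_ [H1 [_ [H2 _]]]]. split; intro E.
      + apply H2. exists d'. split; [exact H|]. right. symmetry. exact E.
      + apply H1. exists d'. split; [exact H|]. right. symmetry. exact E. }
  set (A := fun x => ~ exists d, bad d /\ q d = x).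
  assert (Key : forall B, borel B -> (~ meager B \/ ~ lebesgue_null B) ->
     (exists x, B x /\ A x) /\ ~ (forall x, B x -> A x)).
  { intros B HB HI. destruct (borel_code B HB) as [c Hc].
    assert (Hbad : bad c).
    { destruct HI as [HI | HI]; [left | right]; intro H; apply HI.
      - eapply meager_mono; [exact H|]. intros x Hx. apply Hc. exact Hx.
      - eapply null_mono; [exact H|]. intros x Hx. apply Hc. exact Hx. }
    destruct (Hs c Hbad) as [Hp1 [_ [Hq1 [_ Hqp]]]].
    split.
    - exists (p c). split; [apply Hc; exact Hp1|].
      intros [d [Hd E]]. destruct (classic (c = d)) as [e|e].
      + subst d. apply Hqp. rewrite E. reflexivity.
      + destruct (Hdist c d Hbad Hd e) as [_ H2]. apply H2. rewrite E. reflexivity.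
    - intro H. apply (H (q c)); [apply Hc; exact Hq1|]. exists c. auto. }
  exists A. split; [|split].
  - intro x. exists (fun _ => 0%nat). intros y y' Hy Hy' _.
    apply NNPP in Hy. apply NNPP in Hy'.
    destruct Hy as [d [Hd E]]. destruct Hy' as [d' [Hd' E']].
    destruct (classic (d = d')) as [e|e].
    + subst d'. rewrite E in E'. injection E'. auto.
    + exfalso. destruct (Hdist d d' Hd Hd' e) as [H1 _]. apply H1. rewrite E, E'. reflexivity.
  - intros B HB HI. apply Key; auto.
  - intros B HB HI. apply Key; auto.
Qed.
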